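(* Let $G$ be a connected graph. The vertex sets of the connected components of the distance-2 graph $G_2$ are independent sets in $G$ if and only if $G$ is bipartite or complete multipartite.
   Context: The distance-2 graph $G_2$ of $G$ has vertex set $V(G)$, two vertices being adjacent iff their distance in $G$ is exactly 2. *)

(* Defs.v *)
From mathcomp Require Import all_boot.
Set Implicit Arguments. Unset Strict Implicit. Unset Printing Implicit Defensive.

Definition simple_graph (T : finType) (e : rel T) :=
  symmetric e /\ irreflexive e.

Definition connected_graph (T : finType) (e : rel T) :=
  forall x y : T, connect e x y.

Definition walk_len (T : finType) (e : rel T) (n : nat) (x y : T) : bool :=
  [exists p : n.-tuple T, path e x p && (last x p == y)].

Definition dist_eq (T : finType) (e : rel T) (x y : T) (n : nat) : bool :=
  walk_len e n x y && [forall m : 'I_n, ~~ walk_len e m x y].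

Definition dist2_graph (T : finType) (e : rel T) : rel T :=
  fun x y => dist_eq e x y 2.

Definition independent (T : finType) (e : rel T) (A : {set T}) :=
  forall x y, x \in A -> y \in A -> ~~ e x y.

Definition components (T : finType) (r : rel T) : {set {set T}} :=
  [set [set y | connect r x y] | x : T].

Definition bipartite (T : finType) (e : rel T) :=
  exists A : {set T}, forall x y, e x y -> (x \in A) != (y \in A).

Definition complete_multipartite (T : finType) (e : rel T) :=
  exists P : {set {set T}}, partition P [set: T] /\
    forall x y, e x y = (pblock P x != pblock P y).

(* Main.v *)
Require Import Defs.
From mathcomp Require Import all_boot.
Set Implicit Arguments. Unset Strict Implicit. Unset Printing Implicit Defensive.

Lemma walk0 (T : finType) (e : rel T) x y : walk_len e 0 x y -> x = y.
Proof. by move=> /existsP [[[|a s] Hs]] //= /eqP. Qed.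

Lemma walk1 (T : finType) (e : rel T) x y : walk_len e 1 x y -> e x y.
Proof. by move=> /existsP [[[|a [|b s]] Hs]] //= /andP[/andP[H _] /eqP <-]. Qed.

Lemma walk2 (T : finType) (e : rel T) x y : walk_len e 2 x y -> exists z, e x z && e z y.
Proof.
by move=> /existsP [[[|a [|b [|c s]]] Hs]] //= /andP[/and3P[H1 H2 _] /eqP <-]; exists a; rewrite H1.
Qed.

Lemma dist2E (T : finType) (e : rel T) x y : dist2_graph e x y ->
  [/\ x != y, ~~ e x y & exists z, e x z && e z y].
Proof.
move=> /andP[/walk2 H /forallP F]; split => //.
  apply/negP=> /eqP Exy; move: (F (@Ordinal 2 0 isT)); apply/negP/negPn.
  by apply/existsP; exists [tuple]; rewrite /= Exy.
apply/negP=> Exy; move: (F (@Ordinal 2 1 isT)); apply/negP/negPn.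
by apply/existsP; exists [tuple y]; rewrite /= Exy eqxx.
Qed.

Lemma dist2I (T : finType) (e : rel T) x y z : x != y -> ~~ e x y -> e x z -> e z y ->
  dist2_graph e x y.
Proof.
move=> Hxy Nxy Hxz Hzy; apply/andP; split.
  by apply/existsP; exists [tuple z; y]; rewrite /= Hxz Hzy eqxx.
apply/forallP => -[[|[|m]] Hm] //.
  by apply/negP => /walk0 /eqP; rewrite (negbTE Hxy).
by apply/negP => /walk1; rewrite (negbTE Nxy).
Qed.

Lemma dist2_sym (T : finType) (e : rel T) : symmetric e -> symmetric (dist2_graph e).
Proof.
move=> se x y; apply/idP/idP => /dist2E [H1 H2 [z /andP[H3 H4]]];
  (apply: (@dist2I _ _ _ _ z); [by rewrite eq_sym | by rewrite se | by rewrite se | by rewrite se]).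
Qed.

Lemma connect_pres (T : finType) (r : rel T) (P : T -> Prop) :
  (forall a b, r a b -> P a -> P b) -> forall x y, P x -> connect r x y -> P y.
Proof.
move=> H x y Px /connectP [p]; elim: p x Px => [|z p IH] x Px /=; first by move=> _ ->.
by move=> /andP[rxz pp] Ly; apply: (IH z (H _ _ rxz Px) pp Ly).
Qed.

Definition cl (T : finType) (e : rel T) := connect (dist2_graph e).

Lemma cl_sym (T : finType) (e : rel T) : symmetric e -> symmetric (cl e).
Proof. by move=> se; apply: sym_connect_sym; apply: dist2_sym. Qed.

Lemma cl_trans (T : finType) (e : rel T) x y z : cl e x y -> cl e y z -> cl e x z.
Proof. exact: connect_trans. Qed.

Lemma cl_refl (T : finType) (e : rel T) x : cl e x x.
Proof. exact: connect0. Qed.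

Lemma Lloc (T : finType) (e : rel T) : symmetric e -> forall z u w,
  e z u -> e z w -> ~~ cl e u w -> e u w.
Proof.
move=> se z u w Hzu Hzw Ncl; apply/negPn/negP => Nuw; move/negP: Ncl; apply.
have [->|Huw] := eqVneq u w; first exact: cl_refl.
by apply: connect1; apply: (@dist2I _ _ _ _ z) => //; rewrite se.
Qed.

Definition Pc (T : finType) (e : rel T) a b c d :=
  [/\ e a b, e b c & e c d] /\ [/\ cl e a c, cl e b d & ~~ e a d].

Lemma Pc_rev (T : finType) (e : rel T) : symmetric e -> forall a b c d,
  Pc e a b c d -> Pc e d c b a.
Proof.
move=> se a b c d [[H1 H2 H3] [H4 H5 H6]]; by split; split; rewrite 1?se 1?(cl_sym se).
Qed.


Lemma Zlem (T : finType) (e : rel T) : symmetric e ->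
  (forall u v, cl e u v -> ~~ e u v) ->
  forall a b c d n, Pc e a b c d -> e n a -> cl e n b.
Proof.
move=> se Hi a b c d n [[H1 H2 H3] [H4 H5 H6]] Hna.
apply/negPn/negP => Nnb.
have Nna : ~~ cl e n a by apply/negP => /Hi; rewrite Hna.
have Hnb : e n b by apply: (Lloc se (z := a)); rewrite // se.
have Nnc : ~~ cl e n c.
  by apply/negP => Hnc; move/negP: Nna; apply; apply: (cl_trans Hnc); rewrite cl_sym.
have Hnc : e n c by apply: (Lloc se (z := b)); rewrite // se.
have Nnd : ~~ cl e n d.
  by apply/negP => Hnd; move/negP: Nnb; apply; apply: (cl_trans Hnd); rewrite cl_sym.
have Hnd : e n d by apply: (Lloc se (z := c)); rewrite // se.
have Nad : ~~ cl e a d.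
  apply/negP => Had; have : cl e c d by apply: cl_trans Had; rewrite cl_sym.
  by move/Hi; rewrite H3.
by move: (Lloc se Hna Hnd Nad); rewrite (negbTE H6).
Qed.

Lemma ZBlem (T : finType) (e : rel T) : symmetric e ->
  (forall u v, cl e u v -> ~~ e u v) ->
  forall a b c d n, Pc e a b c d -> e n b -> cl e n a.
Proof.
move=> se Hi a b c d n HP Hnb; have [[H1 H2 H3] [H4 H5 H6]] := HP.
apply/negPn/negP => Nna.
have Hna : e n a by apply: (Lloc se (z := b)); rewrite // se.
by move: (Zlem se Hi HP Hna) => /Hi; rewrite Hnb.
Qed.

Definition J (T : finType) (e : rel T) x0 y0 v :=
  exists a b c d, [/\ Pc e a b c d, cl e x0 a, cl e y0 b & v \in [:: a; b; c; d]].


Lemma cl_symI (T : finType) (e : rel T) x y : symmetric e -> cl e x y -> cl e y x.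
Proof. by move=> se; rewrite cl_sym. Qed.

Ltac cl0 := multimatch goal with
  | H : is_true (cl _ _ _) |- _ => exact H
  | H : is_true (cl _ _ _) |- _ => match goal with S : symmetric _ |- _ => exact (cl_symI S H) end
  end.
Ltac cl1 := first [cl0 | (eapply cl_trans; [cl0|cl0])].
Ltac cl2 := first [cl1 | (eapply cl_trans; [cl0|cl1])].
Ltac cl3 := first [cl2 | (eapply cl_trans; [cl0|cl2])].
Ltac fin := split; [split; split | | | ];
  try done; try (match goal with S : symmetric _ |- _ => by rewrite S end); try (by rewrite !inE eqxx ?orbT); cl3.

Lemma Jstep (T : finType) (e : rel T) : symmetric e ->
  (forall u v, cl e u v -> ~~ e u v) ->
  forall x0 y0 u n, J e x0 y0 u -> e u n -> J e x0 y0 n.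
Proof.
move=> se Hi x0 y0 u n [a [b [c [d [HP Ha Hb Hu]]]]] Hun.
have Hnu : e n u by rewrite se.
have HP' := HP; move: HP' => [[H1 H2 H3] [H4 H5 H6]].
have sc := cl_sym se.
have scx : forall x y, cl e x y -> cl e y x by move=> x y; rewrite sc.
have tr := @cl_trans T e.
rewrite !inE in Hu; case/or4P: Hu => /eqP Eu; subst u.
- have Cnb := Zlem se Hi HP Hnu.
  case: (boolP (e n c)) => Enc.
  + by exists a, n, c, d; fin.
  + by exists c, b, a, n; fin.
- have Cna := ZBlem se Hi HP Hnu.
  case: (boolP (e n d)) => End.
  + by exists a, b, n, d; fin.
  + by exists n, b, c, d; fin.
- have Cnd := ZBlem se Hi (Pc_rev se HP) Hnu.
  case: (boolP (e a n)) => Ean.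
  + by exists a, n, c, d; fin.
  + by exists a, b, c, n; fin.
- have Cnc := Zlem se Hi (Pc_rev se HP) Hnu.
  case: (boolP (e n b)) => Enb.
  + by exists a, b, n, d; fin.
  + by exists n, d, c, b; fin.
Qed.

Lemma exPc (T : finType) (e : rel T) : symmetric e ->
  (forall u v, cl e u v -> ~~ e u v) ->
  forall n p x, size p <= n -> path e x p -> ~~ cl e x (last x p) -> ~~ e x (last x p) ->
  exists a b c d, Pc e a b c d.
Proof.
move=> se Hi; elim=> [|n IH] [|p1 [|p2 q]] x //=; try by rewrite cl_refl.
- by move=> _ /andP[-> _].
- move=> Hs /and3P[Hx1 H12 Hq]; set y := last p2 q => Nxy Exy.
  have sc := cl_sym se.
  case: (boolP (cl e p1 y)) => C1y; last first.
    case: (boolP (e p1 y)) => E1y.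
      by move: Exy; rewrite (Lloc se _ E1y Nxy) // se.
    by apply: (IH (p2 :: q) p1) => //=; rewrite ?H12.
  case: (boolP (e p2 y)) => E2y; last first.
    have N2y : ~~ cl e p2 y.
      apply/negP => C2y; have : cl e p1 p2 by apply: cl_trans C1y _; rewrite sc.
      by move/Hi; rewrite H12.
    by apply: (IH q p2) => //; rewrite ltnS in Hs; apply: ltnW.
  have Cx2 : cl e x p2.
    apply/negPn/negP => Nx2.
    have Ex2 : e x p2 by apply: (Lloc se (z := p1)); rewrite // se.
    by move: Exy; rewrite (Lloc se _ E2y Nxy) // se.
  by exists x, p1, p2, y; split; split.
Qed.

Lemma Jcl (T : finType) (e : rel T) x0 y0 v : symmetric e -> J e x0 y0 v -> cl e x0 v || cl e y0 v.
Proof.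
move=> se [a [b [c [d [[[H1 H2 H3] [H4 H5 H6]] Ha Hb Hv]]]]].
rewrite !inE in Hv; case/or4P: Hv => /eqP ->.
- by rewrite Ha.
- by rewrite Hb orbT.
- by rewrite (cl_trans Ha H4).
- by rewrite (cl_trans Hb H5) orbT.
Qed.

Theorem lemma4p9 (T : finType) (e : rel T) :
  simple_graph e -> connected_graph e ->
  ((forall C, C \in components (dist2_graph e) -> independent e C) <->
   (bipartite e \/ complete_multipartite e)).
Proof.
move=> [se ie] conn; split.
- move=> H.
  have Hi : forall u v, cl e u v -> ~~ e u v.
    move=> u v Cuv; apply: (H [set y | connect (dist2_graph e) u y]).
    + by apply/imsetP; exists u.
    + by rewrite inE connect0.
    + by rewrite inE.
  have sc := cl_sym se.
  case: (boolP [exists x, exists y, ~~ cl e x y && ~~ e x y]).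
  + move/existsP=> [x /existsP [y /andP[N1 N2]]].
    have /connectP [p Hp Ey] := conn x y; subst y.
    have [a [b [c [d HP]]]] := exPc se Hi (leqnn (size p)) Hp N1 N2.
    left; exists [set v | cl e a v] => u v Euv.
    have Ja : J e a b a by exists a, b, c, d; split; rewrite ?cl_refl ?inE ?eqxx.
    have Jall : forall w, J e a b w.
      move=> w; apply: (connect_pres (r := e) (P := J e a b)) (conn a w) => // s t Est Js.
      exact: Jstep se Hi _ _ _ _ Js Est.
    have := Jcl se (Jall u); have := Jcl se (Jall v); rewrite !inE.
    case: (boolP (cl e a u)) => Cau; case: (boolP (cl e a v)) => Cav //= Cbv Cbu.
    * have : cl e u v by apply: cl_trans Cav; rewrite sc.
      by move/Hi; rewrite Euv.
    * have : cl e u v by apply: cl_trans Cbv; rewrite sc.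
      by move/Hi; rewrite Euv.
  + rewrite negb_exists => /forallP Hn.
    right.
    have eqR : {in [set: T] & &, equivalence_rel (cl e)}.
      move=> x y z _ _ _; split; first exact: cl_refl.
      move=> Cxy; apply/idP/idP => C.
      * by apply: cl_trans C; rewrite sc.
      * exact: cl_trans Cxy C.
    have Hpart := equivalence_partitionP eqR.
    exists (equivalence_partition (cl e) [set: T]); split => // x y.
    have [/eqP Hcov Htriv _] := and3P Hpart.
    rewrite eq_pblock //; last by rewrite Hcov inE.
    rewrite pblock_equivalence_partition ?inE //.
    case: (boolP (cl e x y)) => Cxy /=; first by apply/negbTE/Hi.
    by move: (Hn x); rewrite negb_exists => /forallP /(_ y); rewrite Cxy /= negbK.
- case=> [[A HA] | [P [_ HP]]] C /imsetP [x _ ->] u v; rewrite !inE => Hu Hv.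
  + have inv : forall w, connect (dist2_graph e) x w -> (w \in A) = (x \in A).
      move=> w; apply: (connect_pres (P := fun w => (w \in A) = (x \in A))) => // s t Hst Hs.
      have [_ _ [z /andP[H1 H2]]] := dist2E Hst.
      move: (HA _ _ H1) (HA _ _ H2); rewrite -Hs.
      by case: (s \in A); case: (z \in A); case: (t \in A).
    apply/negP => Euv; move: (HA _ _ Euv); by rewrite (inv _ Hu) (inv _ Hv) eqxx.
  + have inv : forall w, connect (dist2_graph e) x w -> pblock P w = pblock P x.
      move=> w; apply: (connect_pres (P := fun w => pblock P w = pblock P x)) => // s t Hst Hs.
      have [_ Nst _] := dist2E Hst.
      by move: Nst; rewrite HP negbK => /eqP <-.
    by rewrite HP (inv _ Hu) (inv _ Hv) eqxx.
Qed.
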